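(* If (a) $\mathrm{Sol}(0)$ is a singleton and (b) $X^\infty\cap\mathcal{K}(f)=\{0\}$, then the set-valued map $\mathrm{Sol}(\cdot)$ is lower semicontinuous at $0$. Conversely, if $\mathrm{Sol}(\cdot)$ is lower semicontinuous at $0$, then (a) holds; and if in addition $X$ and $f$ are convex, then (b) holds as well.
   Context: Standing assumptions: $f:\mathbb{R}^n\to\mathbb{R}\cup\{\pm\infty\}$ is proper (never $-\infty$ and finite at some point) and lower semicontinuous; $X\subset\mathbb{R}^n$ is a nonempty closed set with $\operatorname{dom}f\cap X$ unbounded. $X^\infty=\{u:\exists t_k\to+\infty,\ \exists x_k\in X,\ x_k/t_k\to u\}$; $f^\infty(d)=\inf\{\liminf_{k} f(t_kd_k)/t_k:\ t_k\to+\infty,\ d_k\to d\}$; $\mathcal{K}(f)=\{d: f^\infty(d)\le 0\}$. For $u\in\mathbb{R}^n$, $f_u(x)=f(x)-\langle u,x\rangle$ and $\mathrm{Sol}(u)=\{x\in X: f_u(x)\le f_u(y)\ \forall y\in X\}$. A set-valued map $F$ is lower semicontinuous at $\bar u$ if $F(\bar u)\ne\emptyset$ and for every open $V$ with $F(\bar u)\cap V\ne\emptyset$ there is a neighborhood $U$ of $\bar u$ with $F(u)\cap V\neq\emptyset$ for all $u\in U$. *)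

(* Defs.v *)
From HB Require Import structures.
From mathcomp Require Import all_boot all_order all_algebra.
From mathcomp Require Import all_classical all_reals all_analysis.
Set Implicit Arguments. Unset Strict Implicit. Unset Printing Implicit Defensive.
Import Order.TTheory GRing.Theory Num.Theory.
Import numFieldNormedType.Exports.
Local Open Scope classical_set_scope.
Local Open Scope ring_scope.

Section Defs.
Context {R : realType} {n : nat}.
Notation V := 'rV[R]_n.

Definition inner (u x : V) : R := \sum_(i < n) u ord0 i * x ord0 i.

Definition proper_fun (f : V -> \bar R) : Prop :=
  (forall x, f x != -oo%E) /\ (exists x, f x \is a fin_num).

Definition dom (f : V -> \bar R) : set V := [set x | f x < +oo]%E.

Definition unbounded (A : set V) : Prop :=
  ~ (exists M : R, forall x, A x -> `|x| <= M).

Definition asymp_cone (X : set V) : set V :=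
  [set u | exists (t : nat -> R) (x : nat -> V),
     t @ \oo --> +oo /\ (forall k, X (x k)) /\
     (fun k => (t k)^-1 *: x k) @ \oo --> u].

Definition asymp_fun (f : V -> \bar R) (d : V) : \bar R :=
  ereal_inf [set l | exists (t : nat -> R) (dk : nat -> V),
     t @ \oo --> +oo /\ dk @ \oo --> d /\
     l = limn_einf (fun k => (f (t k *: dk k)%R * ((t k)^-1)%R%:E)%E)].

Definition Kf (f : V -> \bar R) : set V := [set d | (asymp_fun f d <= 0)%E].

Definition fu (f : V -> \bar R) (u : V) (x : V) : \bar R :=
  (f x - (inner u x)%:E)%E.

Definition Sol (f : V -> \bar R) (X : set V) (u : V) : set V :=
  [set x | X x /\ forall y, X y -> (fu f u x <= fu f u y)%E].

Definition lsc_setmap (F : V -> set V) (ubar : V) : Prop :=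
  F ubar !=set0 /\
  forall O : set V, open O -> F ubar `&` O !=set0 ->
    exists2 U, nbhs ubar U & forall u, U u -> F u `&` O !=set0.

Definition convex_set_V (X : set V) : Prop :=
  forall x y (l : R), X x -> X y -> 0 <= l <= 1 ->
    X (l *: x + (1 - l) *: y).

(* convexity of an extended-valued function (convex epigraph) *)
Definition convex_fun (f : V -> \bar R) : Prop :=
  forall x y (a b l : R), (f x <= a%:E)%E -> (f y <= b%:E)%E -> 0 <= l <= 1 ->
    (f (l *: x + (1 - l) *: y)%R <= (l * a + (1 - l) * b)%R%:E)%E.

End Defs.

(* Main.v *)
Require Import Defs.
From HB Require Import structures.
From mathcomp Require Import all_boot all_order all_algebra.
From mathcomp Require Import all_classical all_reals all_analysis.
From mathcomp Require Import lra ring.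
Import Order.TTheory GRing.Theory Num.Theory.
Import numFieldNormedType.Exports.
Local Open Scope classical_set_scope.
Local Open Scope ring_scope.

Section Inner.
Context {R : realType} {n : nat}.
Notation V := 'rV[R]_n.
Implicit Types (u x y d : V).

Lemma entry_le x i : `|x ord0 i| <= `|x|.
Proof.
have /mapP[j Hj ->] : `|x ord0 i| \in [seq `|x k.1 k.2| | k : 'I_1 * 'I_n].
  by apply/mapP; exists (ord0, i) => //=; rewrite mem_enum.
by rewrite [leRHS]/Num.Def.normr /= mx_normrE; apply/bigmax_geP; right => /=; exists j.
Qed.

Lemma inner_le u x : `|inner u x| <= n%:R * (`|u| * `|x|).
Proof.
rewrite /inner; apply: (le_trans (ler_norm_sum _ _ _)).
apply: (@le_trans _ _ (\sum_(i < n) (`|u| * `|x|))).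
  by apply: ler_sum => i _; rewrite normrM ler_pM ?entry_le.
by rewrite sumr_const card_ord mulr_natl.
Qed.

Lemma innerDr u x y : inner u (x + y) = inner u x + inner u y.
Proof. by rewrite /inner -big_split; apply: eq_bigr => i _; rewrite mxE mulrDr. Qed.

Lemma innerZr u a x : inner u (a *: x) = a * inner u x.
Proof. by rewrite /inner mulr_sumr; apply: eq_bigr => i _; rewrite mxE mulrCA. Qed.

Lemma innerZl u a x : inner (a *: u) x = a * inner u x.
Proof. by rewrite /inner mulr_sumr; apply: eq_bigr => i _; rewrite mxE mulrA. Qed.

Lemma innerNr u x : inner u (- x) = - inner u x.
Proof. by rewrite -scaleN1r innerZr mulN1r. Qed.

Lemma innerBr u x y : inner u (x - y) = inner u x - inner u y.
Proof. by rewrite innerDr innerNr. Qed.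

Lemma inner0l x : inner 0 x = 0.
Proof. by rewrite /inner big1 // => i _; rewrite mxE mul0r. Qed.

Lemma inner_self_gt0 d : d != 0 -> 0 < inner d d.
Proof.
move=> d0; rewrite lt_neqAle sumr_ge0 ?andbT; last by move=> i _; exact: sqr_ge0.
apply: contra d0 => /eqP/esym/psumr_eq0P H; apply/eqP/matrixP => i j.
have {}H := H (fun k _ => sqr_ge0 (d ord0 k)).
rewrite (ord1 i) mxE; have := H j isT => /eqP.
by rewrite mulf_eq0 orbb => /eqP.
Qed.

End Inner.

Section Seq.
Context {R : realType} {n : nat}.
Notation V := 'rV[R]_n.

Lemma natinv_small (e : R) : 0 < e -> exists N : nat, forall m, (N <= m)%N -> m.+1%:R^-1 < e.
Proof.
move=> e0; have [N _ HN] := near_infty_natSinv_lt (PosNum e0).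
by exists N => m Nm; apply: HN.
Qed.

Lemma cluster_seq (A : set V) (y : nat -> V) : compact A -> (forall k, A (y k)) ->
  exists2 d, A d & forall B, nbhs d B -> forall N, exists k, (N <= k)%N /\ B (y k).
Proof.
move=> cA Ay.
have yA : (y @ \oo) A by exists 0%N => // k _; exact: Ay.
have [d [Ad cd]] := cA (y @ \oo) _ yA.
exists d => // B Bd N.
have F1 : (y @ \oo) [set v | exists k, (N <= k)%N /\ v = y k].
  by exists N => // k Nk /=; exists k.
have [v [[k [Nk ->]] Bv]] := cd _ B F1 Bd.
by exists k.
Qed.

Lemma extract (y : nat -> V) (d : V) :
  (forall B, nbhs d B -> forall N, exists k, (N <= k)%N /\ B (y k)) ->
  exists phi : nat -> nat, (forall m, (m <= phi m)%N) /\ (y \o phi) @ \oo --> d.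
Proof.
move=> H.
have H' : forall m N, exists k, (N <= k)%N /\ `|d - y k| < m.+1%:R^-1.
  move=> m N; have e0 : 0 < m.+1%:R^-1 :> R by rewrite invr_gt0 ltr0Sn.
  have [k [Nk Bk]] := H (ball d (m.+1%:R^-1)) (nbhsx_ballx _ _ e0) N.
  by exists k; split => //; move: Bk; rewrite -ball_normE.
have [g Hg] := @choice _ _ (fun (mN : nat * nat) k => (mN.2 <= k)%N /\ `|d - y k| < mN.1.+1%:R^-1)
   (fun mN => H' mN.1 mN.2).
pose fix phi m := if m is m'.+1 then g (m, (phi m').+1) else g (0%N, 0%N).
have phiS m : (m <= phi m)%N /\ `|d - y (phi m)| < m.+1%:R^-1.
  case: m => [|m] /=; first by have [? ?] := Hg (0%N, 0%N).
  have [h1 h2] := Hg (m.+1, (phi m).+1); split => //.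
  elim: m h1 {h2} => [|m IH] /= h1; first by apply: leq_trans h1.
  apply: leq_trans h1; rewrite ltnS.
  by have [+ _] := Hg (m.+1, (phi m).+1).
exists phi; split; first by move=> m; have [] := phiS m.
apply/cvgrPdist_lt => e e0; have [N HN] := natinv_small _ e0.
exists N => // m /= Nm; apply: lt_trans (HN m Nm).
by have [] := phiS m.
Qed.

End Seq.

Section Liminf.
Context {R : realType}.
Local Open Scope ereal_scope.

Lemma limn_einfE (v : (\bar R)^nat) : limn_einf v = ereal_sup (range (einfs v)).
Proof. by rewrite limn_einf_lim; apply/cvg_lim => //; exact: cvg_einfs_sup. Qed.

Lemma limn_einf_lt (v : (\bar R)^nat) c : limn_einf v < c ->
  forall N, exists k, (N <= k)%N /\ v k < c.
Proof.
rewrite limn_einfE => H N.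
have : einfs v N < c.
  by apply: le_lt_trans H; apply: ereal_sup_ubound; exists N.
move=> /ereal_inf_lt[_ [k /= Nk <-]] vk.
by exists k.
Qed.

Lemma limn_einf_le0 (v : (\bar R)^nat) (b : R^nat) N0 :
  (forall k, (N0 <= k)%N -> v k <= (b k)%:E) -> b @ \oo --> 0%R ->
  limn_einf v <= 0.
Proof.
move=> vb bc; rewrite limn_einfE; apply: ub_ereal_sup => _ [N _ <-].
apply/lee_addgt0Pr => e e0; rewrite add0e.
have /cvgrPdist_lt/(_ e e0) [M _ HM] := bc.
pose k := maxn N (maxn N0 M).
have Nk : (N <= k)%N by rewrite leq_maxl.
have N0k : (N0 <= k)%N by rewrite (leq_trans _ (leq_maxr _ _)) // leq_maxl.
have Mk : (M <= k)%N by rewrite (leq_trans _ (leq_maxr _ _)) // leq_maxr.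
apply: (le_trans (ereal_inf_lbound _)); first by exists k.
apply: (le_trans (vb k N0k)); rewrite lee_fin.
have := HM k Mk; rewrite /= sub0r normrN => /ltW; apply: le_trans.
exact: ler_norm.
Qed.

End Liminf.

Section Lsc.
Context {R : realType} {n : nat}.
Notation V := 'rV[R]_n.

Lemma real_between (r : R) (e : \bar R) : (r%:E < e)%E -> exists a : R, r < a /\ (a%:E < e)%E.
Proof.
case: e => [s| |] //=; rewrite ?lte_fin => rs.
- exists ((r + s) / 2); split; rewrite ?lte_fin.
  + by rewrite ltr_pdivlMr // mulrDr mulr1 ltrD2l.
  + by rewrite ltr_pdivrMr // mulrDr mulr1 ltrD2r.
- by exists (r + 1); split; rewrite ?ltry // ltrDl.
Qed.

Lemma ereal_between (m e : \bar R) : (m < e)%E -> exists a : R, (m < a%:E)%E /\ (a%:E < e)%E.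
Proof.
case: m => [r| |] //= me.
- by have [a [ra ae]] := @real_between r _ me; exists a; rewrite lte_fin.
- by case: e me.
- case: e me => [s| |] // _.
  + by exists (s - 1); rewrite !lte_fin ltNyr gtrBl ltr01.
  + by exists 0; rewrite ltNyr ltry.
Qed.

Lemma inner_diff_le (u x y : V) : `|inner u y - inner u x| <= (n%:R * `|u| + 1) * `|y - x|.
Proof.
rewrite -innerBr; apply: (le_trans (inner_le _ _)).
by rewrite mulrA ler_wpM2r // lerDl.
Qed.

Lemma lt_fu (f : V -> \bar R) u x a :
  (a%:E < fu f u x)%E <-> ((a + inner u x)%:E < f x)%E.
Proof.
rewrite /fu; case: (f x) => [r| |] /=.
- by rewrite !lte_fin ltrBrDr.
- by rewrite !ltry.
- by rewrite !ltNge !leNye.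
Qed.

Lemma fu_lsc (f : V -> \bar R) (u : V) : lower_semicontinuous f ->
  lower_semicontinuous (fu f u).
Proof.
move=> lf x a /lt_fu /(@real_between _ _) [a' [aa' a'f]].
have [V1 V1x HV1] := lf x a' a'f.
pose K := n%:R * `|u| + 1.
have K0 : 0 < K by rewrite /K ltr_pwDr // mulr_ge0.
pose rho := (a' - (a + inner u x)) / K.
have rho0 : 0 < rho by rewrite divr_gt0 // subr_gt0.
exists (V1 `&` ball x rho).
  by apply: filterI => //; exact: nbhsx_ballx.
move=> y [/HV1 fy]; rewrite -ball_normE /= => xy.
apply/lt_fu; apply: lt_trans fy; rewrite lte_fin.
have : `|inner u y - inner u x| < a' - (a + inner u x).
  apply: (le_lt_trans (inner_diff_le _ _ _)).
  by rewrite -ltr_pdivlMl // mulrC -distrC; rewrite /rho in xy.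
move=> /(le_lt_trans (ler_norm _)) => h.
set i1 := inner u y in h *; set i2 := inner u x in h *; lra.
Qed.

End Lsc.

Section Bnd.
Context {R : realType} {n : nat}.
Notation V := 'rV[R]_n.

Lemma unit_sphere_compact : compact [set v : V | `|v| = 1].
Proof.
apply: bounded_closed_compact.
  exists 1; split; first by rewrite num_real.
  by move=> M M1 v /= ->; apply: ltW.
have -> : [set v : V | `|v| = 1] = (Num.norm) @^-1` [set x : R | x = 1] by [].
apply: preimage_closed; last exact: closed_eq.
by move=> x _; apply: norm_continuous.
Qed.

Lemma fu_fin (f : V -> \bar R) u x r : f x = r%:E -> fu f u x = (r - inner u x)%:E.
Proof. by rewrite /fu => ->. Qed.

Lemma fu_inf (f : V -> \bar R) u x : f x = +oo%E -> fu f u x = +oo%E.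
Proof. by rewrite /fu => ->. Qed.

Lemma natV_cvg0 : (fun k : nat => (k%:R : R)^-1) @ \oo --> 0.
Proof.
have H : \forall k \near \oo, 0 < (k%:R : R) by exists 1%N => // k /= k1; rewrite ltr0n.
exact/(gtr0_cvgV0 H)/cvgr_idn.
Qed.

End Bnd.

Section Bnd2.
Context {R : realType} {n : nat}.
Notation V := 'rV[R]_n.
Variables (f : V -> \bar R) (X : set V).

Lemma bnd x0 r0 : X x0 -> f x0 = r0%:E -> (forall x, f x != -oo%E) ->
  asymp_cone X `&` Kf f = [set 0] ->
  exists delta M, 0 < delta /\ forall u x, `|u| < delta -> X x ->
     (fu f u x <= fu f u x0)%E -> `|x| <= M.
Proof.
move=> Xx0 fx0 fninf Hb.
apply: contrapT => Hn.
have H m : exists ux : V * V, `|ux.1| < m.+1%:R^-1 /\ X ux.2 /\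
     (fu f ux.1 ux.2 <= fu f ux.1 x0)%E /\ m%:R < `|ux.2|.
  apply: contrapT => Hm; apply: Hn; exists m.+1%:R^-1, m%:R; split.
    by rewrite invr_gt0 ltr0Sn.
  move=> u x hu hx hf; rewrite leNgt; apply/negP => hlt; apply: Hm.
  by exists (u, x).
have [ux Hux] := choice H.
pose u k := (ux k).1; pose x k := (ux k).2.
have xgt k : k%:R < `|x k| by have [_ [_ [_ h]]] := Hux k.
have xpos k : 0 < `|x k| by apply: le_lt_trans (xgt k).
pose y k := `|x k|^-1 *: x k.
have ny k : `|y k| = 1.
  by rewrite /y normrZ normrV ?unitfE ?gt_eqF // normr_id mulVf ?gt_eqF.
have [d Sd Hd] := cluster_seq _ _ unit_sphere_compact ny.
have [phi [phim cphi]] := extract _ _ Hd.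
have d0 : d != 0.
  by apply/eqP => d0; move: Sd; rewrite /= d0 normr0 => /eqP; rewrite eq_sym oner_eq0.
suff : (asymp_cone X `&` Kf f) d by rewrite Hb => /= /eqP; rewrite (negbTE d0).
pose t k := `|x (phi k)|.
have tcvg : t @ \oo --> +oo.
  apply/cvgryPge => A; near=> k.
  apply: le_trans (ltW (xgt (phi k))); apply: le_trans (_ : k%:R <= _).
    by near: k; exact: nbhs_infty_ger.
  by rewrite ler_nat.
split.
  exists t, (x \o phi); split; first exact: tcvg.
  split; last exact: cphi.
  by move=> k; have [_ [? _]] := Hux (phi k).
rewrite /Kf /=; apply: le_trans; first apply: ereal_inf_lbound.
  by exists t, (y \o phi); split; first exact: tcvg.
pose C := `|r0| + n%:R * (1 + `|x0|).
apply: (@limn_einf_le0 _ _ (fun k => C * k%:R^-1) 1%N).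
  move=> k k1.
  have [uk [_ [hf _]]] := Hux (phi k).
  rewrite -/(u (phi k)) -/(x (phi k)) in uk hf.
  set w := u (phi k) in uk hf; set z := x (phi k) in hf.
  have -> : t k *: (y \o phi) k = z.
    by rewrite /= /y /t scalerA mulfV ?scale1r // gt_eqF // xpos.
  have Tk : k%:R < t k by apply: le_lt_trans (xgt (phi k)); rewrite ler_nat.
  have Tpos : 0 < t k := xpos (phi k).
  move: hf; rewrite (fu_fin _ _ _ _ fx0).
  case Efz : (f z) => [s| |].
  - rewrite (fu_fin _ _ _ _ Efz) lee_fin => hs.
    rewrite -EFinM lee_fin.
    have kpos : 0 < k%:R :> R by rewrite ltr0n.
    rewrite ler_pdivlMr // mulrAC ler_pdivrMr //.
    have hz := inner_le w z; have hx := inner_le w x0.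
    rewrite -/(t k) in hz.
    set T := t k in hz Tk Tpos *; set a := `|w| in hz hx uk *.
    set N := n%:R in hz hx *; set P := `|x0| in hx *.
    have a0 : 0 <= a by apply: normr_ge0.
    have N0 : 0 <= N by apply: ler0n.
    have P0 : 0 <= P by apply: normr_ge0.
    have ak : a * k%:R <= 1.
      have : a < (phi k).+1%:R^-1 := uk.
      rewrite -div1r ltr_pdivlMr ?ltr0Sn // => h; apply: ltW; apply: le_lt_trans h.
      by apply: ler_wpM2l => //; rewrite ler_nat (leq_trans (phim k)).
    have k1' : 1 <= k%:R :> R by rewrite ler1n.
    have T1 : 1 <= T by apply: ltW; apply: le_lt_trans Tk.
    have r0a := ler_norm r0; have r0p : 0 <= `|r0| := normr_ge0 r0.
    have e1 := ler_norm (inner w z); have e2 := ler_norm (- inner w x0).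
    rewrite normrN in e2.
    have p1 : 0 <= `|r0| * (T - k%:R) by apply: mulr_ge0 => //; lra.
    have p2 : 0 <= N * P * (1 - a * k%:R) by apply: mulr_ge0; [apply: mulr_ge0|lra].
    have p3 : 0 <= N * P * (T - 1) by apply: mulr_ge0; [apply: mulr_ge0|lra].
    have p4 : 0 <= N * T * (1 - a * k%:R) by apply: mulr_ge0; [apply: mulr_ge0 => //; lra|lra].
    have hs' : s <= `|r0| + N * (a * P) + N * (a * T) by lra.
    have p5 : s * k%:R <= (`|r0| + N * (a * P) + N * (a * T)) * k%:R.
      by apply: ler_wpM2r => //; lra.
    rewrite /C -/N -/P; lra.
  - by rewrite (fu_inf _ _ _ Efz) leye_eq.
  - by move: (fninf z); rewrite Efz.
by rewrite -[0](mulr0 C); apply: cvgMr; exact: natV_cvg0.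
Unshelve. all: by end_near.
Qed.

End Bnd2.

Section Exist.
Context {R : realType} {n : nat}.
Notation V := 'rV[R]_n.
Variables (f : V -> \bar R) (X : set V).

Lemma closed_normle (M : R) : closed [set x : V | `|x| <= M].
Proof.
have -> : [set x : V | `|x| <= M] = (Num.norm) @^-1` [set x : R | x <= M] by [].
apply: preimage_closed; last exact: closed_le.
by move=> x _; apply: norm_continuous.
Qed.

Lemma exist_min x0 r0 delta M u : closed X -> lower_semicontinuous f -> X x0 ->
  f x0 = r0%:E ->
  (forall u x, `|u| < delta -> X x -> (fu f u x <= fu f u x0)%E -> `|x| <= M) ->
  `|u| < delta -> Sol f X u !=set0.
Proof.
move=> cX lf Xx0 fx0 HB ud.
pose g := fu f u.
pose S := [set x | X x /\ (g x <= g x0)%E].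
pose m := ereal_inf (g @` S).
pose D := [set c : \bar R | (m < c)%E].
pose B := fun c => [set x | S x /\ (g x < c)%E].
have gx0 : g x0 = (r0 - inner u x0)%:E := fu_fin _ _ _ _ fx0.
have Sx0 : S x0 by split.
have mlt : (m < +oo)%E.
  apply: (@le_lt_trans _ _ (g x0)); first by apply: ereal_inf_lbound; exists x0.
  by rewrite gx0 ltry.
have FF : Filter (filter_from D B).
  apply: filter_from_filter; first by exists +oo%E.
  move=> i j Di Dj; exists (Order.min i j).
    by rewrite /D /= lt_min Di Dj.
  by move=> x [Sx]; rewrite lt_min => /andP[? ?]; split; split.
have PF : ProperFilter (filter_from D B).
  apply: filter_from_proper => c Dc.
  by have [_ [x Sx <-] gxc] := ereal_inf_lt Dc; exists x.
pose A := [set x | X x /\ `|x| <= M].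
have cA : compact A.
  apply: bounded_closed_compact.
    exists M; split; first by rewrite num_real.
    by move=> M' MM' x [_ xM]; apply: le_trans xM (ltW MM').
  exact: closedI cX (closed_normle M).
have FA : filter_from D B A.
  by exists +oo%E => // x [[Xx gx] _]; split => //; exact: HB ud Xx gx.
have [y [Ay cy]] := cA _ PF FA.
exists y; split; first by case: Ay.
have gym : (g y <= m)%E.
  rewrite leNgt; apply/negP => my.
  have [a [ma ay]] := ereal_between _ _ my.
  have [W Wy HW] := fu_lsc _ u lf _ _ ay.
  have FBa : filter_from D B (B a%:E) by exists a%:E.
  have [z [[_ gz] Wz]] := cy (B a%:E) W FBa Wy.
  by move: (HW z Wz); rewrite ltNge (ltW gz).
move=> w Xw.
have [gw|gw] := leP (g w) (g x0).
  by apply: le_trans gym _; apply: ereal_inf_lbound; exists w.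
apply: le_trans gym _; apply: le_trans (ltW gw).
by apply: ereal_inf_lbound; exists x0.
Qed.

End Exist.

Lemma fwd_key {R : realType} (s r0 a i1 i2 b1 b2 c : R) : s - i1 <= r0 - i2 -> i1 <= b1 ->
  - i2 <= b2 -> b1 + b2 <= c -> c < a - r0 -> a < s -> False.
Proof. move=> *; lra. Qed.
Arguments fwd_key {R s r0 a i1 i2 b1 b2 c}.

Section Forward.
Context {R : realType} {n : nat}.
Notation V := 'rV[R]_n.
Variables (f : V -> \bar R) (X : set V).

Lemma fu0 x : fu f 0 x = f x.
Proof. by rewrite /fu inner0l; case: (f x) => [r| |] //=; rewrite oppr0 adde0. Qed.

Lemma sol0_fin x0 : proper_fun f -> (dom f `&` X) !=set0 -> Sol f X 0 x0 ->
  exists r0, f x0 = r0%:E.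
Proof.
move=> [fninf _] [z [dz Xz]] [Xx0 Hx0].
have := Hx0 z Xz; rewrite !fu0 => h.
case Ef : (f x0) => [r| |]; first by exists r.
- by move: h dz; rewrite Ef /dom /= leye_eq => /eqP ->; rewrite ltxx.
- by move: (fninf x0); rewrite Ef.
Qed.

Lemma lsc_forward : proper_fun f -> lower_semicontinuous f -> closed X ->
  (dom f `&` X) !=set0 ->
  (exists x0, Sol f X 0 = [set x0]) -> asymp_cone X `&` Kf f = [set 0] ->
  lsc_setmap (Sol f X) 0.
Proof.
move=> pf lf cX dX [x0 HS] Hb.
have S0x0 : Sol f X 0 x0 by rewrite HS.
have [Xx0 Hx0] := S0x0.
have [r0 fx0] := sol0_fin _ pf dX S0x0.
have fninf := pf.1.
have [delta [M [d0 HB]]] := @bnd _ _ f X _ _ Xx0 fx0 fninf Hb.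
split; first by exists x0.
move=> O oO [x0' [/= + Ox0']]; rewrite HS => /= x0'E; subst x0'.
apply: contrapT => Hn.
have H k : exists uy : V * V, `|uy.1| < delta /\ `|uy.1| < k.+1%:R^-1 /\
    Sol f X uy.1 uy.2 /\ ~ O uy.2.
  apply: contrapT => Hk; apply: Hn.
  have e0 : 0 < Order.min delta k.+1%:R^-1 by rewrite lt_min d0 invr_gt0 ltr0Sn.
  exists (ball 0 (Order.min delta k.+1%:R^-1)); first exact: nbhsx_ballx.
  move=> u; rewrite -ball_normE /= sub0r normrN lt_min => /andP[u1 u2].
  have [y Sy] := @exist_min _ _ f X _ _ _ _ u cX lf Xx0 fx0 HB u1.
  apply: contrapT => Hne; apply: Hk; exists (u, y); do 3 split => //.
  by move=> Oy; apply: Hne; exists y.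
have [uy Huy] := choice H.
pose u k := (uy k).1; pose y k := (uy k).2.
pose A := [set x | X x /\ `|x| <= M].
have cA : compact A.
  apply: bounded_closed_compact.
    exists M; split; first by rewrite num_real.
    by move=> M' MM' x [_ xM]; apply: le_trans xM (ltW MM').
  exact: closedI cX (closed_normle M).
have Ay k : A (y k).
  have [ud [_ [[Xy Hy] _]]] := Huy k.
  by split => //; apply: HB ud Xy _; apply: Hy.
have [p Ap Hp] := cluster_seq _ _ cA Ay.
suff px0 : p = x0.
  subst p; have [k [_ Ok]] := Hp O (open_nbhs_nbhs (conj oO Ox0')) 0%N.
  by have [_ [_ [_ ]]] := Huy k.
suff : Sol f X 0 p by rewrite HS.
split; first by case: Ap.
move=> w Xw; rewrite !fu0; apply: le_trans (_ : f x0 <= f w)%E; last first.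
  by have := Hx0 w Xw; rewrite !fu0.
rewrite fx0 leNgt; apply/negP => /(@real_between _ _) [a [r0a afp]].
have [W Wp HW] := lf p a afp.
pose K := n%:R * (`|M| + `|x0|) + 1.
have K0 : 0 < K by rewrite /K ltr_pwDr // mulr_ge0.
have e0 : 0 < (a - r0) / K by rewrite divr_gt0 // subr_gt0.
have [N HN] := natinv_small _ e0.
have [k [Nk Wk]] := Hp W Wp N.
have := HW _ Wk.
have [_ [uk [[Xy Hy] _]]] := Huy k.
have := Hy x0 Xx0; rewrite -/(u k) -/(y k) in uk Wk *.
rewrite (fu_fin _ _ _ _ fx0).
case Efy : (f (y k)) => [s| |]; last first.
- by move: (fninf (y k)); rewrite Efy.
- by rewrite (fu_inf _ _ _ Efy) leye_eq.
rewrite (fu_fin _ _ _ _ Efy) !lte_fin lee_fin => hs as'.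
have hk := HN k Nk.
have hz := inner_le (u k) (y k); have hx := inner_le (u k) x0.
have yM : `|y k| <= `|M| by have [_ h] := Ay k; apply: le_trans h (ler_norm M).
set a' := `|u k| in hz hx uk *.
have a0 : 0 <= a' by apply: normr_ge0.
have e1 := ler_norm (inner (u k) (y k)); have e2 := ler_norm (- inner (u k) x0).
rewrite normrN in e2.
have kp : 0 < k.+1%:R :> R by rewrite ltr0Sn.
have h1 : a' * K < a - r0.
  move: hk; rewrite ltr_pdivlMr // => hk.
  apply: le_lt_trans hk; apply: ler_wpM2r; [lra|exact: ltW].
have h2 : n%:R * (a' * `|y k|) + n%:R * (a' * `|x0|) <= a' * K.
  rewrite /K mulrDr mulr1 -mulrDr mulrCA -mulrDr ler_wpDr //.
  by apply: ler_wpM2l => //; apply: ler_wpM2l => //; lra.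
exact: (fwd_key hs (le_trans e1 hz) (le_trans e2 hx) h2 h1 as').
Qed.

End Forward.

Lemma uniq_key {R : realType} (s r0 e iy ix0 ix2 j q : R) :
  0 < e -> s - e * iy <= r0 - e * ix0 -> r0 <= s ->
  j = iy - ix2 -> q = ix0 - ix2 -> j <= q / 2 -> 0 < q -> False.
Proof.
move=> e0 h1 h2 h3 h4 h5 q0.
have : e * ix0 <= e * iy by lra.
rewrite ler_pM2l // => h7; lra.
Qed.
Arguments uniq_key {R s r0 e iy ix0 ix2 j q}.

Section Uniq.
Context {R : realType} {n : nat}.
Notation V := 'rV[R]_n.
Variables (f : V -> \bar R) (X : set V).

Lemma lsc_uniq : proper_fun f -> (dom f `&` X) !=set0 ->
  lsc_setmap (Sol f X) 0 -> exists x0, Sol f X 0 = [set x0].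
Proof.
move=> pf dX [[x0 Sx0] H]; exists x0.
apply/seteqP; split; last by move=> _ ->.
move=> x2 Sx2; apply: contrapT => ne.
have [r0 fx0] := @sol0_fin _ _ f X _ pf dX Sx0.
pose d := x0 - x2.
have dne : d != 0 by rewrite subr_eq0; apply/eqP => h; apply: ne; rewrite h.
pose q := inner d d.
have q0 : 0 < q := @inner_self_gt0 _ _ d dne.
pose K := n%:R * `|d| + 1.
have K0 : 0 < K by rewrite /K ltr_pwDr // mulr_ge0.
pose r := q / (2 * K).
have r0p : 0 < r by rewrite divr_gt0 // mulr_gt0.
have [U U0 HU] := H (ball x2 r) (ball_open _ _) (ex_intro _ x2 (conj Sx2 (ballxx _ r0p))).
have /nbhs_ballP[rho rho0 HUr] := U0.
pose eps := rho / (2 * (`|d| + 1)).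
have eps0 : 0 < eps by rewrite divr_gt0 // mulr_gt0 // ltr_pwDr.
have Uu : U (eps *: d).
  apply: HUr; rewrite -ball_normE /= sub0r normrN normrZ gtr0_norm //.
  rewrite /eps -mulrA gtr_pMr // mulrC ltr_pdivrMr ?mulr_gt0 ?ltr_pwDr // mul1r.
  have := normr_ge0 d; lra.
have [y [[Xy Hy] By]] := HU _ Uu.
have h1 := Hy x0 (Sx0.1).
have h2 := Sx0.2 y Xy; rewrite !fu0 fx0 in h2.
move: h1; rewrite (fu_fin _ _ _ _ fx0).
case Efy : (f y) => [s| |]; last first.
- by move: (pf.1 y); rewrite Efy.
- by rewrite (fu_inf _ _ _ Efy) leye_eq.
rewrite (fu_fin _ _ _ _ Efy) lee_fin !innerZl => h1.
move: h2; rewrite Efy lee_fin => h2.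
move: By; rewrite -ball_normE /= => By.
have hb := inner_le d (y - x2).
have hb2 : n%:R * (`|d| * `|y - x2|) <= q / 2.
  have : `|y - x2| <= r by rewrite distrC; apply: ltW.
  move=> yr; apply: le_trans (_ : K * r <= _).
    by rewrite mulrA; apply: ler_pM => //; rewrite /K lerDl.
  rewrite /r le_eqVlt; apply/orP; left; apply/eqP; field; rewrite gt_eqF //.
have hj := le_trans (ler_norm _) (le_trans hb hb2).
apply: (uniq_key eps0 h1 h2 (innerBr _ _ _) (innerBr _ _ _) hj q0).
Qed.

End Uniq.

Lemma kf_key {R : realType} (r e s t eps l : R) : 0 < t -> 0 < e -> 0 < s ->
  eps = e / (2 * s) -> l = 1 - s / t -> 2 * s * `|r| / e < t ->
  r + e < l * r + (1 - l) * (eps * t) -> False.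
Proof.
move=> t0 e0 s0 -> -> h1.
have h2 : (1 - (1 - s / t)) * (e / (2 * s) * t) = e / 2.
  by field; rewrite !gt_eqF.
rewrite h2.
have u0 : 0 <= s / t by rewrite divr_ge0 ?ltW.
have h3 : s / t * `|r| < e / 2.
  rewrite mulrAC ltr_pdivrMr //.
  move: h1; rewrite ltr_pdivrMr // => h1; lra.
have h4 : s / t * (- r) <= s / t * `|r|.
  by apply: ler_wpM2l => //; rewrite -normrN ler_norm.
have h5 : (1 - s / t) * r = r - s / t * r by ring.
rewrite h5; lra.
Qed.
Arguments kf_key {R r e s t eps l}.

Section Convex.
Context {R : realType} {n : nat}.
Notation V := 'rV[R]_n.
Variables (f : V -> \bar R) (X : set V).

Lemma inv_cvg0 (t : nat -> R) : t @ \oo --> +oo -> (fun k => (t k)^-1) @ \oo --> 0.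
Proof.
move=> tc; have tp : \forall k \near \oo, 0 < t k by move/cvgryPgt : tc; apply.
exact/(gtr0_cvgV0 tp).
Qed.

Lemma cone_ray x d s : closed X -> convex_set_V X -> X x -> asymp_cone X d -> 0 <= s ->
  X (x + s *: d).
Proof.
move=> cX cvX Xx [t [xs [tc [Xxs cv]]]] s0.
have [->|sp] := eqVneq s 0; first by rewrite scale0r addr0.
have spos : 0 < s by rewrite lt_neqAle eq_sym sp s0.
pose z k := (s / t k) *: xs k + (1 - s / t k) *: x.
have ev : \forall k \near \oo, s < t k by move/cvgryPgt : tc; apply.
have zE : z = (fun k => s *: ((t k)^-1 *: xs k) + x - (s / t k) *: x).
  apply/funext => k; rewrite /z scalerA scalerBl scale1r addrA //.
have zc : z @ \oo --> s *: d + x - 0 *: x.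
  rewrite zE; apply: cvgB; first apply: cvgD.
  - by apply: cvgZ; [exact: cvg_cst|exact: cv].
  - exact: cvg_cst.
  - apply: cvgZ; last exact: cvg_cst.
    rewrite -[0](mulr0 s); apply: cvgM; [exact: cvg_cst|exact: inv_cvg0].
rewrite scale0r subr0 addrC in zc.
apply: (@closed_cvg _ _ \oo _ z X cX) zc.
near=> k; apply: cvX => //.
have tk : s < t k by near: k.
have tp : 0 < t k by apply: lt_trans tk.
rewrite divr_ge0 ?ltW //=.
by rewrite ?ler_pdivrMr ?ltr_pdivrMr // mul1r.
Unshelve. all: by end_near. Qed.

Lemma kf_ray x d s r : convex_fun f -> lower_semicontinuous f ->
  (forall x, f x != -oo%E) ->
  f x = r%:E -> (asymp_fun f d <= 0)%E -> 0 <= s -> (f (x + s *: d) <= r%:E)%E.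
Proof.
move=> cvf lf fninf fx Kd s0.
have [->|sp] := eqVneq s 0; first by rewrite scale0r addr0 fx.
have spos : 0 < s by rewrite lt_neqAle eq_sym sp s0.
apply/lee_addgt0Pr => e e0.
pose eps := e / (2 * s).
have eps0 : 0 < eps by rewrite divr_gt0 // mulr_gt0.
have : (asymp_fun f d < eps%:E)%E by apply: le_lt_trans Kd _; rewrite lte_fin.
move=> /ereal_inf_lt [_ [t [dk [tc [dc ->]]]] lt].
rewrite leNgt; apply/negP; rewrite -EFinD => hp.
have [W Wp HW] := lf _ _ hp.
pose w k := x - (s / t k) *: x + s *: dk k.
have wc : w @ \oo --> x - 0 *: x + s *: d.
  apply: cvgD; first apply: cvgB.
  - exact: cvg_cst.
  - apply: cvgZ; last exact: cvg_cst.
    rewrite -[0](mulr0 s); apply: cvgM; [exact: cvg_cst|exact: inv_cvg0].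
  - by apply: cvgZ; [exact: cvg_cst|exact: dc].
rewrite scale0r subr0 in wc.
have evW : \forall k \near \oo, W (w k) := wc _ Wp.
have evt : \forall k \near \oo, s < t k by move/cvgryPgt : tc; apply.
have evt2 : \forall k \near \oo, 2 * s * `|r| / e < t k by move/cvgryPgt : tc; apply.
have : \forall k \near \oo, W (w k) /\ s < t k /\ 2 * s * `|r| / e < t k.
  by apply/near_andP; split => //; apply/near_andP.
move=> [N _ HN].
have [k [Nk vk]] := limn_einf_lt _ _ lt N.
have [Wk [stk t2k]] := HN k Nk.
have tp : 0 < t k by apply: lt_trans stk.
move: vk; case Eb : (f (t k *: dk k)) => [b| |] vk; last first.
- by move: (fninf (t k *: dk k)); rewrite Eb.
- by move: vk; rewrite gt0_mulye ?lte_fin ?invr_gt0 // ltNge leey.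
move: vk; rewrite -EFinM lte_fin ltr_pdivrMr // => vk.
pose l := 1 - s / t k.
have l0 : 0 <= l <= 1.
  rewrite /l subr_ge0 ler_pdivrMr // mul1r (ltW stk) /= lerBlDr lerDl.
  by rewrite divr_ge0 ?ltW.
have fxr : (f x <= r%:E)%E by rewrite fx.
have fb : (f (t k *: dk k) <= (eps * t k)%:E)%E by rewrite Eb lee_fin ltW.
have cz := cvf _ _ _ _ l fxr fb l0.
have zw : l *: x + (1 - l) *: (t k *: dk k) = w k.
  have -> : 1 - l = s / t k by rewrite /l; ring.
  rewrite /l /w scalerBl scale1r scalerA -mulrA mulVf ?gt_eqF // mulr1.
  by [].
rewrite zw in cz.
have := lt_le_trans (HW _ Wk) cz; rewrite lte_fin.
exact: (kf_key tp e0 spos erefl erefl t2k).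
Qed.

End Convex.

Lemma b_key {R : realType} (C b r0 e ix0 s q : R) :
  C <= b - e * (ix0 + s * q) -> b <= r0 -> e * (s * q) = `|C| + `|r0 - e * ix0| + 1 -> False.
Proof.
move=> h1 h2 h3.
have := ler_norm (- C); rewrite normrN; have := ler_norm (r0 - e * ix0).
have h4 : e * (ix0 + s * q) = e * ix0 + e * (s * q) by ring.
lra.
Qed.
Arguments b_key {R C b r0 e ix0 s q}.

Section Final.
Context {R : realType} {n : nat}.
Notation V := 'rV[R]_n.
Variables (f : V -> \bar R) (X : set V).

Lemma zero_cone x0 : X x0 -> asymp_cone X 0.
Proof.
move=> Xx0; exists (fun k => k%:R), (fun=> x0); split; first exact: cvgr_idn.
split => //; rewrite -[0](scale0r x0); apply: cvgZ; [exact: natV_cvg0|exact: cvg_cst].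
Qed.

Lemma zero_K x0 r0 : f x0 = r0%:E -> Kf f 0.
Proof.
move=> fx0; rewrite /Kf /=; apply: le_trans; first apply: ereal_inf_lbound.
  exists (fun k => k%:R), (fun k => (k%:R)^-1 *: x0); split; first exact: cvgr_idn.
  split => //; rewrite -[0](scale0r x0); apply: cvgZ; [exact: natV_cvg0|exact: cvg_cst].
apply: (@limn_einf_le0 _ _ (fun k => `|r0| * (k%:R)^-1) 1%N).
  move=> k k1; rewrite scalerA mulfV ?scale1r ?pnatr_eq0 -?lt0n // fx0.
  by rewrite -EFinM lee_fin ler_wpM2r ?invr_ge0 ?ler0n // ler_norm.
by rewrite -[0](mulr0 `|r0|); apply: cvgM; [exact: cvg_cst|exact: natV_cvg0].
Qed.

Lemma convex_b : proper_fun f -> lower_semicontinuous f -> closed X ->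
  (dom f `&` X) !=set0 -> lsc_setmap (Sol f X) 0 ->
  convex_set_V X -> convex_fun f -> asymp_cone X `&` Kf f = [set 0].
Proof.
move=> pf lf cX dX [[x0 Sx0] H] cvX cvf.
have [r0 fx0] := @sol0_fin _ _ f X _ pf dX Sx0.
have Xx0 := Sx0.1.
apply/seteqP; split; last first.
  by move=> _ ->; split; [exact: (zero_cone _ Xx0)|exact: (zero_K _ _ fx0)].
move=> d [Ad Kd]; apply: contrapT => dne; have {dne} dne : d != 0 by apply/eqP.
have [U U0 HU] := H setT openT (ex_intro _ x0 (conj Sx0 I)).
have /nbhs_ballP[rho rho0 HUr] := U0.
pose eps := rho / (2 * (`|d| + 1)).
have eps0 : 0 < eps by rewrite divr_gt0 // mulr_gt0 // ltr_pwDr.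
have Uu : U (eps *: d).
  apply: HUr; rewrite -ball_normE /= sub0r normrN normrZ gtr0_norm //.
  rewrite /eps -mulrA gtr_pMr // mulrC ltr_pdivrMr ?mulr_gt0 ?ltr_pwDr // mul1r.
  have := normr_ge0 d; lra.
have [z [[Xz Hz] _]] := HU _ Uu.
pose q := inner d d.
have q0 : 0 < q := @inner_self_gt0 _ _ d dne.
have := Hz x0 Xx0; rewrite (fu_fin _ _ _ _ fx0).
case Efz : (f z) => [c| |]; last first.
- by move: (pf.1 z); rewrite Efz.
- by rewrite (fu_inf _ _ _ Efz) leye_eq.
move=> _; rewrite (fu_fin _ _ _ _ Efz) in Hz.
set C := c - inner (eps *: d) z in Hz.
pose K := `|C| + `|r0 - eps * inner d x0| + 1.
pose s := K / (eps * q).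
have K0 : 0 <= K by rewrite /K !addr_ge0.
have s0 : 0 <= s := divr_ge0 K0 (mulr_ge0 (ltW eps0) (ltW q0)).
have Xp := @cone_ray _ _ X x0 d s cX cvX Xx0 Ad s0.
have fp := @kf_ray _ _ f x0 d s r0 cvf lf pf.1 fx0 Kd s0.
have := Hz _ Xp.
case Efp : (f (x0 + s *: d)) fp => [b| |] fp; last first.
- by move: (pf.1 (x0 + s *: d)); rewrite Efp.
- by move: fp; rewrite leye_eq.
rewrite (fu_fin _ _ _ _ Efp) lee_fin innerZl innerDr innerZr => hC.
move: fp; rewrite lee_fin => fp.
apply: (b_key hC fp).
have hK : eps * (s * q) = K.
  rewrite /s; field; rewrite ?gt_eqF //.
exact: hK.
Qed.

End Final.

Lemma mainTheorem7_aux (R : realType) (n : nat)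
  (f : 'rV[R]_n -> \bar R) (X : set 'rV[R]_n) :
  proper_fun f -> lower_semicontinuous f ->
  closed X -> X !=set0 -> unbounded (dom f `&` X) ->
  ( ((exists x0, Sol f X 0 = [set x0]) /\ asymp_cone X `&` Kf f = [set 0]) ->
      lsc_setmap (Sol f X) 0 )
  /\
  ( lsc_setmap (Sol f X) 0 ->
      (exists x0, Sol f X 0 = [set x0]) /\
      (convex_set_V X -> convex_fun f -> asymp_cone X `&` Kf f = [set 0]) ).
Proof.
move=> pf lf cX X0 ub.
have dX : (dom f `&` X) !=set0.
  apply: contrapT => h; apply: ub; exists 0 => x dx; exfalso; apply: h; by exists x.
split.
  by move=> [Ha Hb]; exact: lsc_forward.
move=> Hl; split; first exact: (lsc_uniq _ _ pf dX Hl).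
by move=> cvX cvf; exact: convex_b.
Qed.


Theorem mainTheorem7 (R : realType) (n : nat)
  (f : 'rV[R]_n -> \bar R) (X : set 'rV[R]_n) :
  proper_fun f -> lower_semicontinuous f ->
  closed X -> X !=set0 -> unbounded (dom f `&` X) ->
  ( ((exists x0, Sol f X 0 = [set x0]) /\ asymp_cone X `&` Kf f = [set 0]) ->
      lsc_setmap (Sol f X) 0 )
  /\
  ( lsc_setmap (Sol f X) 0 ->
      (exists x0, Sol f X 0 = [set x0]) /\
      (convex_set_V X -> convex_fun f -> asymp_cone X `&` Kf f = [set 0]) ).
Proof. exact: mainTheorem7_aux. Qed.
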